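(* Let $G=(V,E)$ be a finite connected multigraph, $\mathscr H_0$ a connected component of its exchange graph, and $G_0$ the spanning subgraph of $G$ associated to $\mathscr H_0$. If $X$ and $X'$ are two different saturated components of $G_0$, then $X\cap X'=\emptyset$.
   Context: A spanning tree of $G$ is a subgraph with vertex set $V$ that is a tree; a spanning 2-forest is a subgraph with vertex set $V$, without cycles, with exactly two connected components; $\mathcal{ST}(G)$, $\mathcal{SF}_2(G)$ denote the sets of these. For a spanning subgraph $G'$, $G'+e$ (resp. $G'-e$) is the spanning subgraph with edge set $E(G')\cup\{e\}$ (resp. $E(G')\setminus\{e\}$). The exchange graph $\mathscr H$ of $G$ has vertex set $\mathscr V_1\sqcup\mathscr V_2$, $\mathscr V_1=\{(F,T): F\in\mathcal{SF}_2(G),T\in\mathcal{ST}(G),E(F)\cap E(T)=\emptyset\}$, $\mathscr V_2=\{(T,F):T\in\mathcal{ST}(G),F\in\mathcal{SF}_2(G),E(F)\cap E(T)=\emptyset\}$, with $(F,T)\in\mathscr V_1$ adjacent to $(T',F')\in\mathscr V_2$ iff there is $e\in E(T)$ with $F'=T-e$ and $T'=F+e$. For a connected component $\mathscr H_0$, the edge set $E(A)\cup E(B)$ is independent of the vertex $(A,B)$ of $\mathscr H_0$, and $G_0$ is the spanning subgraph with this edge set. For $X\subseteq V$, $G_0[X]$ is the induced subgraph on $X$. $X$ is saturated with respect to $G_0$ if $G_0[X]$ has exactly $2|X|-2$ edges; a saturated component of $G_0$ is a subset of $V$ that is saturated with respect to $G_0$ and maximal for inclusion among such subsets. *)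

(* Defs.v *)
From mathcomp Require Import all_boot.
Set Implicit Arguments. Unset Strict Implicit. Unset Printing Implicit Defensive.

(* A finite multigraph: vertex type V, edge-label type E, and an endpoint map
   ends : E -> V * V (parallel edges = distinct labels with the same ends).
   A spanning subgraph is identified with its edge set S : {set E}. *)
Section Graphs.
Variables (V E : finType) (ends : E -> V * V).

Definition adj (S : {set E}) : rel V :=
  fun x y => [exists e in S, (ends e == (x, y)) || (ends e == (y, x))].

Definition comps (S : {set E}) : {set {set V}} :=
  [set [set y | connect (adj S) x y] | x : V].

Definition ncomp (S : {set E}) : nat := #|comps S|.

(* no cycles: no edge of S (loops included) has its ends joined in S - e *)
Definition acyclic (S : {set E}) : bool :=
  [forall e in S, ~~ connect (adj (S :\ e)) (ends e).1 (ends e).2].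

Definition spanning_tree (S : {set E}) : bool := acyclic S && (ncomp S == 1).
Definition spanning_2forest (S : {set E}) : bool := acyclic S && (ncomp S == 2).

Definition connected_graph : bool := ncomp setT == 1.

(* Exchange graph.  A vertex is (b, A, B): b = false encodes (F,T) in V1
   (A = F a 2-forest, B = T a tree); b = true encodes (T,F) in V2. *)
Definition hvert : finType := (bool * {set E} * {set E})%type.

Definition hvalid (v : hvert) : bool :=
  let: (b, A, B) := v in
  [&& (if b then spanning_tree A && spanning_2forest B
       else spanning_2forest A && spanning_tree B) & A :&: B == set0].

Definition hadj12 (F T T' F' : {set E}) : bool :=
  [exists e in T, (F' == T :\ e) && (T' == e |: F)].

Definition hadj : rel hvert := fun u w =>
  [&& hvalid u, hvalid w &
   match u, w with
   | (false, F, T), (true, T', F') => hadj12 F T T' F'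
   | (true, T', F'), (false, F, T) => hadj12 F T T' F'
   | _, _ => false
   end].

Definition is_hcomp (H0 : {set hvert}) : Prop :=
  exists2 v, hvalid v & H0 = [set w | connect hadj v w].

(* edge set E(A) ∪ E(B) of the spanning subgraph associated to a vertex (A,B) *)
Definition G0_of (v : hvert) : {set E} := v.1.2 :|: v.2.

Definition induced_edges (G0 : {set E}) (X : {set V}) : {set E} :=
  [set e in G0 | ((ends e).1 \in X) && ((ends e).2 \in X)].

(* |E(G0[X])| = 2|X| - 2, written without truncated subtraction *)
Definition saturated (G0 : {set E}) (X : {set V}) : bool :=
  #|induced_edges G0 X| + 2 == 2 * #|X|.

Definition saturated_component (G0 : {set E}) (X : {set V}) : bool :=
  saturated G0 X &&
  [forall Y : {set V}, (saturated G0 Y && (X \subset Y)) ==> (Y == X)].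

End Graphs.

(* Main.v *)
Require Import Defs.
From mathcomp Require Import all_boot.
From mathcomp Require Import zify.
Set Implicit Arguments. Unset Strict Implicit.

Section Aux.
Variables (V E : finType) (ends : E -> V * V).

Let gS (S : {set E}) x := [set y | connect (adj ends S) x y].

Lemma adj_sym (S : {set E}) : symmetric (adj ends S).
Proof.
move=> x y; rewrite /adj; apply/existsP/existsP => -[e He]; exists e;
  by rewrite orbC.
Qed.

Lemma adj_mono (S S' : {set E}) : S' \subset S -> subrel (adj ends S') (adj ends S).
Proof.
move=> sub x y /existsP[e /andP[eS H]]; apply/existsP; exists e.
by rewrite (subsetP sub _ eS).
Qed.

Lemma connect_mono (S S' : {set E}) : S' \subset S ->
  subrel (connect (adj ends S')) (connect (adj ends S)).
Proof.
move=> sub; apply: connect_sub => x y H; apply: connect1; exact: adj_mono H.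
Qed.

Lemma acyclic_sub (S S' : {set E}) : acyclic ends S -> S' \subset S -> acyclic ends S'.
Proof.
move=> /forallP aS sub; apply/forallP => e; apply/implyP => eS'.
have := aS e; rewrite (subsetP sub _ eS') /=; apply: contra.
apply: connect_mono; exact: setSD.
Qed.

Lemma ncomp_lt (S S' : {set E}) u v : S' \subset S -> connect (adj ends S) u v ->
  ~~ connect (adj ends S') u v -> ncomp ends S < ncomp ends S'.
Proof.
move=> sub cuv ncuv.
pose h (C : {set V}) := [set y | [exists x in C, connect (adj ends S) x y]].
have symS := sym_connect_sym (adj_sym S).
have hg x : h (gS S' x) = gS S x.
  apply/setP => y; rewrite !inE; apply/existsP/idP.
    move=> [z /andP[]]; rewrite inE => /(connect_mono sub) xz zy.
    exact: connect_trans xz zy.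
  by move=> xy; exists x; rewrite inE connect0.
rewrite /ncomp.
have -> : comps ends S = h @: comps ends S'.
  rewrite /comps -imset_comp; apply: eq_imset => x /=; exact: (esym (hg x)).
rewrite ltn_neqAle leq_imset_card andbT; apply/negP => /imset_injP inj.
have : gS S' u = gS S' v.
  apply: inj; rewrite ?(imset_f (fun x => gS S' x)) //.
  rewrite !hg; apply/setP => y; rewrite !inE; exact: same_connect symS _ _ cuv _.
move/setP => /(_ v); rewrite !inE connect0 => H; by rewrite H in ncuv.
Qed.

Lemma forest_bound (S : {set E}) : acyclic ends S -> #|S| + ncomp ends S <= #|V|.
Proof.
elim: {S}#|S| {-2}S (erefl #|S|) => [|n IH] S cS aS.
  rewrite cS add0n /ncomp /comps.
  exact: (leq_trans (leq_imset_card _ _)).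
have [e eS] : exists e, e \in S.
  apply/set0Pn; apply/negP => /eqP S0; by rewrite S0 cards0 in cS.
have aS' : acyclic ends (S :\ e) by apply: acyclic_sub aS (subD1set S e).
have cS' : #|S :\ e| = n by move: cS; rewrite (cardsD1 e S) eS add1n => -[].
have := IH _ cS' aS'.
have : ncomp ends S < ncomp ends (S :\ e).
  apply: (@ncomp_lt _ _ (ends e).1 (ends e).2 (subD1set S e)).
    apply: connect1; apply/existsP; exists e; by rewrite eS -surjective_pairing eqxx.
  by move/forallP: aS => /(_ e); rewrite eS.
rewrite cS; lia.
Qed.

Lemma comps_lower (S : {set E}) (X : {set V}) x0 :
  (forall e, e \in S -> ((ends e).1 \in X) && ((ends e).2 \in X)) ->
  x0 \in X -> #|~: X| < ncomp ends S.
Proof.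
move=> inX x0X.
have single x : x \notin X -> gS S x = [set x].
  move=> xX; apply/setP => y; rewrite !inE; apply/idP/eqP; last by move=> ->; exact: connect0.
  case/connectP => -[|z p] /= => [_ -> //|/andP[/existsP[e /andP[eS]] H] _].
  have /andP[h1 h2] := inX e eS.
  by case/orP: H => /eqP Ee; rewrite Ee /= in h1 h2; rewrite ?h1 ?h2 in xX.
pose A := [set [set x] | x in ~: X].
have cA : #|A| = #|~: X| by apply: card_imset; exact: set1_inj.
have sub : gS S x0 |: A \subset comps ends S.
  apply/subsetP => C; rewrite !inE => /orP[/eqP -> |].
    exact: (imset_f (fun x => gS S x)).
  case/imsetP => x; rewrite inE => xX ->; rewrite -single //.
  exact: (imset_f (fun x => gS S x)).
have nA : gS S x0 \notin A.
  apply/imsetP => -[x]; rewrite inE => xX /setP /(_ x0).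
  rewrite !inE connect0 => /esym /eqP Ex; by rewrite -Ex x0X in xX.
have := subset_leq_card sub; rewrite cardsU1 nA cA /ncomp; by rewrite add1n.
Qed.

Lemma forest_X (S : {set E}) (X : {set V}) x0 : acyclic ends S -> x0 \in X ->
  #|induced_edges ends S X| < #|X|.
Proof.
move=> aS x0X.
have aI : acyclic ends (induced_edges ends S X).
  apply: acyclic_sub aS _; apply/subsetP => e; rewrite inE => /andP[] //.
have := forest_bound aI.
have := @comps_lower (induced_edges ends S X) X x0.
have := cardsC X.
move=> h1 h2 h3.
have : #|~: X| < ncomp ends (induced_edges ends S X).
  apply: h2 => // e; rewrite inE => /andP[] //.
lia.
Qed.

Lemma hvalid_path (p : seq (hvert E)) x :
  path (hadj ends) x p -> hvalid ends x -> hvalid ends (last x p).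
Proof.
elim: p x => //= y p IH x /andP[hxy pp] _; apply: (IH y pp).
by case/and3P: hxy.
Qed.

End Aux.

Theorem lemma2p7 (V E : finType) (ends : E -> V * V)
    (H0 : {set hvert E}) (v : hvert E) (X X' : {set V}) :
  connected_graph ends ->
  is_hcomp ends H0 -> v \in H0 ->
  saturated_component ends (G0_of v) X ->
  saturated_component ends (G0_of v) X' ->
  X != X' ->
  X :&: X' = set0.
Proof.
move=> _ [v0 hv0 ->]; rewrite inE => /connectP[p pp ->].
have := hvalid_path pp hv0.
case: (last v0 p) => [[b A] B] hv.
have [aA aB] : acyclic ends A /\ acyclic ends B.
  move: hv => /=; case: b => /andP[].
    by case/andP => /andP[? _] /andP[? _].
  by case/andP => /andP[? _] /andP[? _].
rewrite /G0_of /=.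
set G := A :|: B.
have ub (Y : {set V}) y : y \in Y -> #|induced_edges ends G Y| + 2 <= 2 * #|Y|.
  move=> yY.
  have s : induced_edges ends G Y \subset
       induced_edges ends A Y :|: induced_edges ends B Y.
    apply/subsetP => e; rewrite !inE => /andP[/orP[] -> ->]; by rewrite ?orbT.
  have := subset_leq_card s; have := cardsUI (induced_edges ends A Y) (induced_edges ends B Y).
  have := forest_X aA yY; have := forest_X aB yY; lia.
move=> /andP[sX /forallP mX] /andP[sX' /forallP mX'] neq.
apply/eqP; apply/negPn/negP => /set0Pn[y yI].
have yX : y \in X by move: yI; rewrite inE => /andP[].
have yX' : y \in X' by move: yI; rewrite inE => /andP[].
have satU : saturated ends G (X :|: X').
  rewrite /saturated eqn_leq (ub _ y) ?inE ?yX //=.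
  have s : induced_edges ends G X :|: induced_edges ends G X' \subset
      induced_edges ends G (X :|: X').
    apply/subsetP => e; rewrite !inE => /orP[] /and3P[-> h1 h2];
      by rewrite h1 h2 ?orbT.
  have i : induced_edges ends G X :&: induced_edges ends G X' =
      induced_edges ends G (X :&: X').
    apply/setP => e; rewrite !inE.
    by case: (e \in A) (e \in B) ((ends e).1 \in X) ((ends e).1 \in X') ((ends e).2 \in X) ((ends e).2 \in X') => [] [] [] [] [] [].
  have := subset_leq_card s.
  have := cardsUI (induced_edges ends G X) (induced_edges ends G X').
  rewrite i.
  have := ub _ _ yI.
  have := cardsUI X X'.
  move: sX sX'; rewrite /saturated => /eqP h1 /eqP h2.
  lia.
have e1 := mX (X :|: X'); rewrite satU subsetUl /= in e1.
have e2 := mX' (X :|: X'); rewrite satU subsetUr /= in e2.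
by rewrite -(eqP e1) (eqP e2) eqxx in neq.
Qed.
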